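(* Let $P$ be a poset and $v$ an assignment of variables to elements of $P$. Then for all $n\in\omega$ and $1\leq k,r,s<\omega$: $P,v\models\phi_{krsn}(x_1,\ldots,x_k,y)$ if and only if $\exists$ has an $n$-strategy for the $(\alpha,\beta)$-game with starting position $(\{v(x_1),\ldots,v(x_k)\},\{v(y)\})$ for all $2\leq\alpha\leq r+1$ and $2\leq\beta\leq s+1$.
   Context: Work in the first-order signature with one binary relation $\leq$; write $\vec{x}_k=(x_1,\ldots,x_k)$. For $1\leq k<\omega$: $J_k(\vec{x}_k,y)$ is a formula holding under $v$ iff $v(y)$ is the join of $\{v(x_1),\ldots,v(x_k)\}$, and $M_k(\vec{x}_k,y)$ iff $v(y)$ is their meet; $C_k(\vec{x}_k,y)=\bigvee_{i=1}^k(y=x_i)$ and $D_k=\neg C_k$; $C_{km}(\vec{x}_k,\vec{y}_m)$ holds iff $\{v(y_1),\ldots,v(y_m)\}\subseteq\{v(x_1),\ldots,v(x_k)\}$. Define $\sigma_k(\vec{x}_k,c)=\exists z(C_k(\vec{x}_k,z)\wedge z\leq c)$, $\tau_{kr}(\vec{x}_k,\vec{a}_r,c)=C_{kr}(\vec{x}_k,\vec{a}_r)\wedge M_r(\vec{a}_r,c)$, $\rho_{ks}(\vec{x}_k,\vec{b}_s)=\exists z(C_k(\vec{x}_k,z)\wedge J_s(\vec{b}_s,z))$. Define recursively $\phi_{krs0}(\vec{x}_k,y)=D_k(\vec{x}_k,y)$ and $\phi_{krs(n+1)}(\vec{x}_k,y)=\forall\vec{a}_r\forall\vec{b}_s\forall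 c\Big(\big(\sigma_k(\vec{x}_k,c)\to\phi_{(k+1)rsn}(\vec{x}_k,c,y)\big)\wedge\big(\tau_{kr}(\vec{x}_k,\vec{a}_r,c)\to\phi_{(k+1)rsn}(\vec{x}_k,c,y)\big)\wedge\big(\rho_{ks}(\vec{x}_k,\vec{b}_s)\to\bigvee_{i=1}^s\phi_{(k+1)rsn}(\vec{x}_k,b_i,y)\big)\Big)$. The $(\alpha,\beta)$-game on $P$ with starting position $(U_0,V)$ is played between $\forall$ and $\exists$ in rounds $0,1,2,\ldots$; a set $U$ is maintained, initially $U_0$, with $V$ fixed. Each round $\forall$ moves and $\exists$ responds: (1) if $b\geq a$ for some $a\in U$, $\forall$ may play $(b)$ and $\exists$ must add $b$ to $U$; (2) if $A\subseteq U$ with $|A|<\alpha$ and $\bigwedge A$ exists in $P$, $\forall$ may play $A$ and $\exists$ must add $\bigwedge A$ to $U$; (3) if $B\subseteq P$ with $|B|<\beta$ and $\bigvee B$ exists and lies in $U$, $\forall$ may play $B$ and $\exists$ must choose some $b\in B$ and add it to $U$. $\forall$ wins in round $n$ if $U\cap V\neq\emptyset$ at the beginning of round $n$. $\exists$ has an $n$-strategy if she can guarantee that $\forall$ does not win until at least round $n+1$. *)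

(* Defs.v *)
(* A poset is a type P with a relation le (partial order axioms
   are hypotheses of the theorem). *)
From Stdlib Require Import List Arith.
Import ListNotations.
Set Implicit Arguments.

Section Defs.
Variable P : Type.
Variable le : P -> P -> Prop.

Definition is_meet (A : list P) (m : P) : Prop :=
  (forall a, In a A -> le m a) /\ (forall z, (forall a, In a A -> le z a) -> le z m).

Definition is_join (B : list P) (j : P) : Prop :=
  (forall b, In b B -> le b j) /\ (forall z, (forall b, In b B -> le b z) -> le j z).

(* Semantics of the formulas, with the values v(x_1),...,v(x_k) given as the
   list xs (so k = length xs) and v(y) given as y. *)
Definition D_sem (xs : list P) (y : P) : Prop := ~ In y xs.
Definition sigma_sem (xs : list P) (c : P) : Prop := exists z, In z xs /\ le z c.
Definition tau_sem (xs a : list P) (c : P) : Prop :=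
  (forall ai, In ai a -> In ai xs) /\ is_meet a c.
Definition rho_sem (xs b : list P) : Prop := exists z, In z xs /\ is_join b z.

Fixpoint phi (r s n : nat) (xs : list P) (y : P) : Prop :=
  match n with
  | 0 => D_sem xs y
  | S n' =>
      forall (a : list P), length a = r ->
      forall (b : list P), length b = s ->
      forall c : P,
        (sigma_sem xs c -> phi r s n' (xs ++ [c]) y) /\
        (tau_sem xs a c -> phi r s n' (xs ++ [c]) y) /\
        (rho_sem xs b -> exists bi, In bi b /\ phi r s n' (xs ++ [bi]) y)
  end.

(* The (alpha,beta)-game with current set U and fixed V = {y}.
   estrat alpha beta n U y : Exists can guarantee that Forall does not win
   before round n+1 (i.e. U meets V at the beginning of none of the rounds 0..n).
   A set A with |A| < alpha is represented by a list of length < alpha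
   enumerating it.  If Exists cannot respond to a legal move she loses. *)
Definition add (U : P -> Prop) (b : P) : P -> Prop := fun p => U p \/ p = b.

Fixpoint estrat (alpha beta n : nat) (U : P -> Prop) (y : P) : Prop :=
  ~ U y /\
  match n with
  | 0 => True
  | S n' =>
      (* move (1) *)
      (forall a b, U a -> le a b -> estrat alpha beta n' (add U b) y) /\
      (* move (2) *)
      (forall (A : list P) m, length A < alpha -> (forall x, In x A -> U x) ->
         is_meet A m -> estrat alpha beta n' (add U m) y) /\
      (* move (3) *)
      (forall (B : list P) j, length B < beta -> is_join B j -> U j ->
         exists b, In b B /\ estrat alpha beta n' (add U b) y)
  end.
End Defs.

(* Main.v *)
Require Import Defs.
From Stdlib Require Import List Arith Lia.
Import ListNotations.

Section S.
Variable P : Type.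
Variable le : P -> P -> Prop.
Hypothesis le_refl : forall x, le x x.

Lemma pad (L : list P) m : L <> [] -> length L <= m ->
  exists L', length L' = m /\ forall x, In x L' <-> In x L.
Proof.
  intros HL Hm. destruct L as [|h t]; [congruence|].
  exists ((h :: t) ++ repeat h (m - length (h :: t))). split.
  - rewrite length_app, repeat_length. lia.
  - intro x. rewrite in_app_iff. split; [|tauto].
    intros [H|H]; [exact H|]. apply repeat_spec in H. subst. left; reflexivity.
Qed.

Lemma meet_tr A A' m : (forall x, In x A' <-> In x A) -> is_meet le A m -> is_meet le A' m.
Proof.
  intros E [H1 H2]. split.
  - intros a Ha. apply H1, E, Ha.
  - intros z Hz. apply H2. intros a Ha. apply Hz, E, Ha.
Qed.

Lemma join_tr A A' m : (forall x, In x A' <-> In x A) -> is_join le A m -> is_join le A' m.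
Proof.
  intros E [H1 H2]. split.
  - intros a Ha. apply H1, E, Ha.
  - intros z Hz. apply H2. intros a Ha. apply Hz, E, Ha.
Qed.

Variables r s : nat.
Variable y : P.

Lemma phi_notin n : forall xs, phi le r s n xs y -> ~ In y xs.
Proof.
  induction n as [|n IH]; simpl; intros xs H Hin.
  - exact (H Hin).
  - destruct (H (repeat y r) (repeat_length _ _) (repeat y s) (repeat_length _ _) y)
      as [H1 _].
    apply (IH _ (H1 (ex_intro _ y (conj Hin (le_refl y))))).
    apply in_app_iff. right. left. reflexivity.
Qed.

Lemma main n : forall xs (U : P -> Prop), (forall p, U p <-> In p xs) -> xs <> [] ->
  (phi le r s n xs y -> forall alpha beta, alpha <= r + 1 -> beta <= s + 1 ->
     estrat le alpha beta n U y) /\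
  (estrat le (r+1) (s+1) n U y -> phi le r s n xs y).
Proof.
  induction n as [|n IH]; intros xs U EU Hne.
  - simpl. split.
    + intros H alpha beta _ _. split; [|exact I]. intro Hu. apply H, EU, Hu.
    + intros [H _] Hin. apply H, EU, Hin.
  - assert (EA : forall c p, add U c p <-> In p (xs ++ [c])).
    { intros c p. unfold add. rewrite in_app_iff, EU. simpl. intuition. }
    assert (NE : forall c, xs ++ [c] <> []).
    { intros c E. destruct xs; simpl in E; congruence. }
    split.
    + intros H alpha beta Ha Hb.
      pose proof (phi_notin (S n) xs H) as Hn.
      assert (Hs : forall c, sigma_sem le xs c -> phi le r s n (xs ++ [c]) y).
      { intros c Hc. exact (proj1 (H (repeat y r) (repeat_length _ _)
                        (repeat y s) (repeat_length _ _) c) Hc). }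
      simpl. split; [intro Hu; apply Hn, EU, Hu|]. split; [|split].
      * intros a b Ua Hab. apply (proj1 (IH _ _ (EA b) (NE b))); auto.
        apply Hs. exists a. split; [apply EU|]; assumption.
      * intros A m HA HAU Hm. apply (proj1 (IH _ _ (EA m) (NE m))); auto.
        destruct A as [|a0 A'].
        -- destruct xs as [|x0 xs']; [congruence|].
           apply Hs. exists x0. split; [left; reflexivity|].
           apply (proj2 Hm). intros a0 Ha0; destruct Ha0.
        -- destruct (pad (a0 :: A') r) as [L [HL EL]]; [congruence|simpl in *; lia|].
           refine (proj1 (proj2 (H L HL (repeat y s) (repeat_length _ _) m)) _).
           split.
           ++ intros ai Hai. apply EU, HAU, EL, Hai.
           ++ exact (meet_tr _ _ _ EL Hm).
      * intros B j HB Hj Uj. destruct B as [|b0 B'].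
        -- exfalso. apply (phi_notin n (xs ++ [y])).
           ++ apply Hs. exists j. split; [apply EU; exact Uj|].
              apply (proj2 Hj). intros b Hb'; destruct Hb'.
           ++ apply in_app_iff; right; left; reflexivity.
        -- destruct (pad (b0 :: B') s) as [L [HL EL]]; [congruence|simpl in *; lia|].
           destruct (proj2 (proj2 (H (repeat y r) (repeat_length _ _) L HL j)))
             as [bi [Hbi Hphi]].
           ++ exists j. split; [apply EU; exact Uj|exact (join_tr _ _ _ EL Hj)].
           ++ exists bi. split; [apply EL; exact Hbi|].
              apply (proj1 (IH _ _ (EA bi) (NE bi))); auto.
    + intros [Hu [H1 [H2 H3]]] a Ha b Hb c. split; [|split].
      * intros [z [Hz Hzc]]. apply (proj2 (IH _ _ (EA c) (NE c))).
        apply (H1 z); [apply EU|]; assumption.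
      * intros [Hsub Hm]. apply (proj2 (IH _ _ (EA c) (NE c))).
        apply (H2 a); [lia| |exact Hm]. intros x Hx. apply EU, Hsub, Hx.
      * intros [z [Hz Hj]]. destruct (H3 b z) as [bi [Hbi Hst]]; [lia|exact Hj|apply EU, Hz|].
        exists bi. split; [exact Hbi|]. apply (proj2 (IH _ _ (EA bi) (NE bi))). exact Hst.
Qed.
End S.

Theorem lemma5p3 (P : Type) (le : P -> P -> Prop)
  (le_refl : forall x, le x x)
  (le_antisym : forall x y, le x y -> le y x -> x = y)
  (le_trans : forall x y z, le x y -> le y z -> le x z)
  (n k r s : nat) (xs : list P) (y : P) :
  length xs = k -> 1 <= k -> 1 <= r -> 1 <= s ->
  (phi le r s n xs y <->
   forall alpha beta : nat, 2 <= alpha <= r + 1 -> 2 <= beta <= s + 1 ->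
     estrat le alpha beta n (fun p => In p xs) y).
Proof.
  intros Hk Hk1 Hr Hs.
  assert (Hne : xs <> []) by (intro E; subst; simpl in Hk1; lia).
  destruct (@main P le le_refl r s y n xs (fun p => In p xs) (fun p => iff_refl _) Hne) as [H1 H2].
  split.
  - intros H alpha beta Ha Hb. apply H1; [exact H|lia|lia].
  - intros H. apply H2, H; lia.
Qed.
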